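(* Let $i\in\{1,\dots,N\}$, $\mathbb I\subset\{i-2K,\dots,i+2K\}$ and $k,l\notin\mathbb I$. Then $|G^{(\mathbb I)}_{kl}|\le 8K^2\Gamma^2\gamma$.
   Context: $K\ge1$ is an integer. $H$ is an $N\times N$ real symmetric matrix, $z\in\mathbb C^+$, $G=(H-z)^{-1}$. For $\mathbb T\subset\{1,\dots,N\}$, $H^{(\mathbb T)}$ has entries $H_{ij}\mathbf 1_{i\notin\mathbb T}\mathbf 1_{j\notin\mathbb T}$ and $G^{(\mathbb T)}=(H^{(\mathbb T)}-z)^{-1}$; $A_{\mathbb S,\mathbb U}$ denotes a submatrix. Control parameters: $\Gamma=1\vee\max_{i,j}|G_{ij}|$ and $\gamma=1\vee\sup_i\sup_{\mathbb I,\mathbb J}\|(G^{(\mathbb J)}_{\mathbb I,\mathbb I})^{-1}\|$, where the inner supremum is over all disjoint $\mathbb I,\mathbb J\subset\{i-2K,\dots,i+2K\}$ and $\|\cdot\|$ is the operator norm. *)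

(* Defs.v *)
(* Complex scalars: an arbitrary numClosedFieldType C
   (e.g. the complex numbers); "real" entries are those with x \is Num.real. *)
From HB Require Import structures.
From mathcomp Require Import all_boot all_order all_algebra.
Set Implicit Arguments. Unset Strict Implicit. Unset Printing Implicit Defensive.
Import Order.TTheory GRing.Theory Num.Theory.
Local Open Scope ring_scope.

Definition minor_mat (C : numClosedFieldType) (N : nat) (T : {set 'I_N})
  (H : 'M[C]_N) : 'M[C]_N :=
  \matrix_(i, j) (if (i \notin T) && (j \notin T) then H i j else 0).

Definition resolvent (C : numClosedFieldType) (N : nat) (H : 'M[C]_N) (z : C)
  : 'M[C]_N := invmx (H - z%:M).

(* A_{S,S}: the principal submatrix indexed by S (in increasing order) *)
Definition subm (C : numClosedFieldType) (N : nat) (A : 'M[C]_N)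
  (S : {set 'I_N}) : 'M[C]_#|S| :=
  \matrix_(a, b) A (enum_val a) (enum_val b).

Definition window (N K : nat) (i : 'I_N) : {set 'I_N} :=
  [set j : 'I_N | (i <= j + 2 * K)%N && (j <= i + 2 * K)%N].

Definition vnorm2 (C : numClosedFieldType) (n : nat) (v : 'cV[C]_n) : C :=
  \sum_j `|v j 0| ^+ 2.

(* ||A|| <= g  (operator norm w.r.t. Euclidean norm), for g >= 0 *)
Definition opnorm_le (C : numClosedFieldType) (n : nat) (A : 'M[C]_n) (g : C)
  : Prop := forall v : 'cV[C]_n, vnorm2 (A *m v) <= g ^+ 2 * vnorm2 v.

Definition Gamma (C : numClosedFieldType) (N : nat) (G : 'M[C]_N) : C :=
  \big[Num.max/1]_(p : 'I_N * 'I_N) `|G p.1 p.2|.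

(* Main.v *)
Require Import Defs.
From HB Require Import structures.
From mathcomp Require Import all_boot all_order all_algebra.
From mathcomp Require Import ring lra zify.
Import Order.TTheory GRing.Theory Num.Theory.
Local Open Scope ring_scope.

Definition Pm (C : numClosedFieldType) {N : nat} (I : {set 'I_N}) : 'M[C]_(#|I|, N) :=
  \matrix_(p, j) ((enum_val p == j)%:R).

Lemma mulPt (C : numClosedFieldType) N (I : {set 'I_N}) m (A : 'M[C]_(m, N)) k p :
  (A *m (Pm C I)^T) k p = A k (enum_val p).
Proof.
rewrite mxE (bigD1 (enum_val p)) //= big1 ?addr0.
  by rewrite !mxE eqxx mulr1.
by move=> j /negPf hj; rewrite !mxE eq_sym hj mulr0.
Qed.

Lemma mulP (C : numClosedFieldType) N (I : {set 'I_N}) m (A : 'M[C]_(N, m)) p l :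
  (Pm C I *m A) p l = A (enum_val p) l.
Proof.
rewrite mxE (bigD1 (enum_val p)) //= big1 ?addr0.
  by rewrite !mxE eqxx mul1r.
by move=> j /negPf hj; rewrite !mxE eq_sym hj mul0r.
Qed.

Lemma PPt (C : numClosedFieldType) N (I : {set 'I_N}) :
  Pm C I *m (Pm C I)^T = 1%:M.
Proof.
apply/matrixP => p q; rewrite mulPt !mxE (inj_eq enum_val_inj).
by case: (p == q).
Qed.

Lemma DmulA (C : numClosedFieldType) N (I : {set 'I_N}) m (A : 'M[C]_(N, m)) j c :
  ((Pm C I)^T *m (Pm C I *m A)) j c = (j \in I)%:R * A j c.
Proof.
rewrite mxE.
under eq_bigr => p _ do rewrite mulP !mxE.
case: (boolP (j \in I)) => hj.
  rewrite (bigD1 (enum_rank_in hj j)) //= big1 ?addr0.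
    by rewrite enum_rankK_in // eqxx.
  move=> p hp; case: eqP => [e|]; last by rewrite mul0r.
  by move: hp; rewrite -{2}e enum_valK_in eqxx.
rewrite big1 ?mul0r // => p _; case: eqP => [e|]; last by rewrite mul0r.
by move: hj; rewrite -e enum_valP.
Qed.

Lemma subm_eq (C : numClosedFieldType) N (I : {set 'I_N}) (G : 'M[C]_N) :
  subm G I = Pm C I *m G *m (Pm C I)^T.
Proof. by apply/matrixP => p q; rewrite mulPt mulP mxE. Qed.

Lemma minor_eq (C : numClosedFieldType) N (I : {set 'I_N}) (H : 'M[C]_N) :
  minor_mat I H = (1%:M - (Pm C I)^T *m Pm C I) *m H *m (1%:M - (Pm C I)^T *m Pm C I).
Proof.
set Q := (1%:M - _).
have QA : forall m (A : 'M[C]_(N, m)) j c, (Q *m A) j c = (j \notin I)%:R * A j c.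
  move=> m A j c; rewrite mulmxBl mul1mx -mulmxA.
  rewrite [LHS]mxE [X in _ + X]mxE [X in _ - X]DmulA.
  by case: (j \in I) => /=; rewrite ?mul1r ?mul0r ?subrr ?subr0.
have AQ : forall m (A : 'M[C]_(m, N)) j c, (A *m Q) j c = (c \notin I)%:R * A j c.
  move=> m A j c.
  have QT : Q^T = Q by rewrite /Q linearB /= trmx1 trmx_mul trmxK.
  have -> : (A *m Q) j c = ((A *m Q)^T) c j by rewrite [RHS]mxE.
  by rewrite trmx_mul QT QA mxE.
apply/matrixP => j c; rewrite AQ QA !mxE.
by case: (j \in I); case: (c \in I); rewrite /= ?mul0r ?mul1r.
Qed.
Lemma real_sym_unit (C : numClosedFieldType) (N : nat) (S : 'M[C]_N) (z : C) :
  (forall i j, S i j \is Num.real) -> (forall i j, S i j = S j i) ->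
  0 < 'Im z -> S - z%:M \in unitmx.
Proof.
move=> Sr Ss Hz; rewrite unitmxE unitfE; apply/negP => /det0P [v vn0 hv].
have hS : v *m S = z *: v.
  by apply/eqP; rewrite -subr_eq0 -mul_mx_scalar -mulmxBr hv.
pose t := \sum_j `|v 0 j| ^+ 2.
pose s := \sum_j (v *m S) 0 j * (v 0 j)^*.
have st : s = z * t.
  rewrite /s /t hS mulr_sumr; apply: eq_bigr => j _.
  by rewrite mxE normCK mulrA.
have sr : s \is Num.real.
  apply/CrealP; rewrite /s rmorph_sum /=.
  under eq_bigr => j _ do rewrite mxE rmorphM /= conjCK rmorph_sum mulr_suml.
  rewrite exchange_big /=; apply: eq_bigr => a _.
  rewrite mxE mulr_suml; apply: eq_bigr => j _.
  rewrite rmorphM /= (conj_Creal (Sr _ _)) (Ss j a); ring.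
have t0 : t != 0.
  apply/negP => /eqP /psumr_eq0P H0.
  apply/negP: vn0; rewrite negbK; apply/eqP/matrixP => i j.
  rewrite (ord1 i) mxE; apply/eqP; rewrite -normr_eq0 -sqrf_eq0; apply/eqP.
  by apply: H0 => // k _; rewrite exprn_ge0.
have tr : t \is Num.real by apply: sum_real => j _; apply: ger0_real; rewrite exprn_ge0.
have zr : z \is Num.real.
  have -> : z = s / t by rewrite st mulfK.
  by rewrite rpredM // rpredV.
by move/Creal_ImP: zr => zi; rewrite zi ltxx in Hz.
Qed.
Lemma sum_sq_le (C : numClosedFieldType) n (a : 'I_n -> C) :
  (forall p, 0 <= a p) ->
  (\sum_p a p) ^+ 2 <= n%:R * \sum_p a p ^+ 2.
Proof.
move=> a0.
have key : \sum_p \sum_q (a p - a q) ^+ 2 =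
    2%:R * (n%:R * \sum_p a p ^+ 2 - (\sum_p a p) ^+ 2).
  have E : forall p q, (a p - a q) ^+ 2 = a p ^+ 2 + a q ^+ 2 - 2%:R * (a p * a q).
    by move=> p q; ring.
  under eq_bigr => p _ do under eq_bigr => q _ do rewrite E.
  rewrite expr2 big_distrlr /=.
  under eq_bigr => p _ do rewrite !big_split /= sumr_const card_ord sumrN -mulr_sumr.
  rewrite !big_split /= sumr_const card_ord sumrN -mulr_sumr sumrMnl.
  by rewrite -mulr_natl; ring.

have ge : 0 <= \sum_p \sum_q (a p - a q) ^+ 2.
  apply: sumr_ge0 => p _; apply: sumr_ge0 => q _.
  by rewrite -realEsqr rpredB // ger0_real.
by rewrite key pmulr_rge0 // subr_ge0 in ge.
Qed.

Lemma big_max_props (C : numClosedFieldType) (T : eqType) (r : seq T) (F : T -> C) :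
  (forall x, 0 <= F x) ->
  1 <= \big[Num.max/1]_(x <- r) F x /\
  forall x, x \in r -> F x <= \big[Num.max/1]_(x <- r) F x.
Proof.
move=> F0; elim: r => [|y r [IH1 IH2]].
  by rewrite big_nil lexx.
have c : F y >=< \big[Num.max/1]_(x <- r) F x.
  apply: real_comparable; first exact: ger0_real.
  by apply: ger0_real; apply: le_trans IH1.
rewrite big_cons; split.
  by rewrite comparable_le_max // IH1 orbT.
move=> x; rewrite inE => /orP [/eqP ->|xr].
  by rewrite comparable_le_max // lexx.
by rewrite comparable_le_max // IH2 // orbT.
Qed.

Lemma Gamma_props (C : numClosedFieldType) N (G : 'M[C]_N) :
  1 <= Gamma G /\ forall a b, `|G a b| <= Gamma G.
Proof.
have [h1 h2] := @big_max_props C _ (index_enum _) (fun p : 'I_N * 'I_N => `|G p.1 p.2|)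
   (fun _ => normr_ge0 _).
split; first exact: h1.
move=> a b; exact: (h2 (a, b) (mem_index_enum _)).
Qed.

Lemma card_window N K (i : 'I_N) : (#|window K i| <= 4 * K + 1)%N.
Proof.
pose f := fun j : 'I_N => (inord (j + 2 * K - i) : 'I_(4 * K).+1).
have inj : {in window K i &, injective f}.
  move=> a b; rewrite !inE => /andP [a1 a2] /andP [b1 b2] /(congr1 (@nat_of_ord _)).
  rewrite /f !inordK; try lia.
  by move=> e; apply: val_inj; rewrite /=; lia.
rewrite -(card_in_imset inj).
apply: leq_trans (max_card _) _; rewrite card_ord; lia.
Qed.

Lemma arithK (K : nat) : (1 <= K)%N -> (4 * K + 2 <= 8 * K ^ 2)%N.
Proof. move=> HK; rewrite expnS expn1; nia. Qed.

Theorem corollary3p2 (C : numClosedFieldType) (N K : nat) (H : 'M[C]_N)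
  (z : C) (g : C)
  (HK : (1 <= K)%N)
  (Hreal : forall i j, H i j \is Num.real)
  (Hsym : H^T = H)
  (Hz : 0 < 'Im z)
  (Hg1 : 1 <= g)
  (Hg : forall (i : 'I_N) (I J : {set 'I_N}),
      I \subset window K i -> J \subset window K i -> [disjoint I & J] ->
      subm (resolvent (minor_mat J H) z) I \in unitmx /\
      opnorm_le (invmx (subm (resolvent (minor_mat J H) z) I)) g)
  (i : 'I_N) (I : {set 'I_N}) (k l : 'I_N)
  (HI : I \subset window K i) (Hk : k \notin I) (Hl : l \notin I) :
  `|resolvent (minor_mat I H) z k l|
    <= 8%:R * (K ^ 2)%:R * Gamma (resolvent H z) ^+ 2 * g.
Proof.
have Hs : forall a b, H a b = H b a.
  by move=> a b; rewrite -[in LHS]Hsym mxE.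
have m0 : minor_mat set0 H = H.
  by apply/matrixP => a b; rewrite !mxE !in_set0.
have [Bu Bn] : subm (resolvent H z) I \in unitmx /\
      opnorm_le (invmx (subm (resolvent H z) I)) g.
  rewrite -m0; apply: (Hg i I set0 HI (sub0set _)).
  by rewrite -setI_eq0 setI0.
set M := H - z%:M.
have Mu : M \in unitmx by apply: real_sym_unit.
set G := resolvent H z.
have MG : M *m G = 1%:M by rewrite /G /resolvent mulmxV.
set P := Pm C I.
set D := P^T *m P.
set Q := 1%:M - D.
rewrite subm_eq -/P in Bu Bn.
set Ai := invmx (P *m G *m P^T) in Bn.
set At := P^T *m Ai *m P.
set Y := G - G *m At *m G.
have BA : P *m G *m P^T *m Ai = 1%:M by rewrite mulmxV.
have AB : Ai *m (P *m G *m P^T) = 1%:M by rewrite mulVmx.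
have DGA : D *m G *m At = D.
  transitivity (P^T *m (P *m G *m P^T *m Ai) *m P); first by rewrite /D /At !mulmxA.
  by rewrite BA mulmx1.
have AGD : At *m G *m D = D.
  transitivity (P^T *m (Ai *m (P *m G *m P^T)) *m P); first by rewrite /D /At !mulmxA.
  by rewrite AB mulmx1.
have DY : D *m Y = 0.
  by rewrite /Y mulmxBr mulmxA (mulmxA D G At) DGA subrr.
have YD : Y *m D = 0.
  rewrite /Y mulmxBl.
  have -> : G *m At *m G *m D = G *m (At *m G *m D) by rewrite !mulmxA.
  by rewrite AGD subrr.
have QY : Q *m Y = Y by rewrite /Q mulmxBl mul1mx DY subr0.
have QAt : Q *m At = 0.
  rewrite /Q mulmxBl mul1mx.
  have -> : D *m At = P^T *m (P *m P^T) *m Ai *m P by rewrite /D /At !mulmxA.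
  by rewrite PPt mulmx1 subrr.
have MY : M *m Y = 1%:M - At *m G.
  rewrite /Y mulmxBr MG.
  have -> : M *m (G *m At *m G) = M *m G *m At *m G by rewrite !mulmxA.
  by rewrite MG mul1mx.
have MiY : (minor_mat I H - z%:M) *m Y = Q.
  have E1 : (minor_mat I H - z%:M) *m Y = Q *m (M *m Y).
    rewrite minor_eq -/P -/D -/Q (mulmxBl (Q *m H *m Q) z%:M Y).
    rewrite -(mulmxA (Q *m H) Q Y) QY /M (mulmxBl H z%:M Y) (mulmxBr Q).
    by rewrite (mulmxA Q H Y) (mulmxA Q z%:M Y) scalar_mxC -(mulmxA z%:M Q Y) QY.
  by rewrite E1 MY mulmxBr mulmx1 mulmxA QAt mul0mx subr0.
have Miu : minor_mat I H - z%:M \in unitmx.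
  apply: real_sym_unit => // a b; rewrite !mxE.
    by case: ifP => // _; rewrite real0.
  by rewrite Hs andbC.
set Gi := resolvent (minor_mat I H) z.
have GiQ : Gi *m Q = Y.
  by rewrite -MiY /Gi /resolvent mulmxA mulVmx // mul1mx.
have GiY : Gi k l = Y k l.
  rewrite -GiQ /Q mulmxBr mulmx1 [RHS]mxE [X in _ + X]mxE.
  have -> : (Gi *m D) k l = 0.
    rewrite /D mulmxA mxE big1 // => p _.
    rewrite [X in _ * X]mxE; case: eqP => [e|]; last by rewrite mulr0.
    by move: Hl; rewrite -e enum_valP.
  by rewrite subr0.
have [Ga1 GaB] := @Gamma_props C N G.
set Ga := Gamma G in Ga1 GaB *.
have Ga0 : 0 <= Ga by apply: le_trans Ga1.
have g0 : 0 <= g by apply: le_trans Hg1.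
pose v : 'cV[C]_#|I| := \col_q G (enum_val q) l.
pose x := Ai *m v.
have Sx : (G *m At *m G) k l = \sum_p G k (enum_val p) * x p 0.
  have -> : G *m At *m G = (G *m P^T) *m (Ai *m (P *m G)) by rewrite /At !mulmxA.
  rewrite mxE; apply: eq_bigr => p _; rewrite mulPt; congr (_ * _).
  rewrite [LHS]mxE [RHS]mxE; apply: eq_bigr => q _; by rewrite mulP mxE.
have a0 : forall p, 0 <= `|x p 0| by move=> p; exact: normr_ge0.
have vn : vnorm2 v <= #|I|%:R * Ga ^+ 2.
  have : vnorm2 v <= \sum_(q < #|I|) Ga ^+ 2.
    by apply: ler_sum => q _; rewrite mxE !expr2 ler_pM.
  by move=> h; apply: (le_trans h); rewrite sumr_const card_ord mulr_natl.
have xn : vnorm2 x <= g ^+ 2 * (#|I|%:R * Ga ^+ 2).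
  by apply: le_trans (Bn v) _; apply: ler_wpM2l; rewrite ?exprn_ge0.
have sa : \sum_p `|x p 0| <= #|I|%:R * g * Ga.
  have s0 : 0 <= \sum_p `|x p 0| by apply: sumr_ge0.
  have b0 : 0 <= #|I|%:R * g * Ga by rewrite !mulr_ge0.
  rewrite -ler_sqr ?nnegE //.
  apply: le_trans (@sum_sq_le C _ (fun p => `|x p 0|) a0) _.
  apply: le_trans (_ : #|I|%:R * (g ^+ 2 * (#|I|%:R * Ga ^+ 2)) <= _).
    by apply: ler_wpM2l => //; exact: xn.
  by rewrite le_eqVlt; apply/orP; left; apply/eqP; ring.
have hS : `|\sum_p G k (enum_val p) * x p 0| <= Ga * (#|I|%:R * g * Ga).
  apply: le_trans (ler_norm_sum _ _ _) _.
  apply: le_trans (_ : _ <= \sum_p Ga * `|x p 0|) _.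
    by apply: ler_sum => p _; rewrite normrM; apply: ler_wpM2r.
  by rewrite -mulr_sumr; apply: ler_wpM2l.
have -> : Gi k l = G k l - (G *m At *m G) k l.
  by rewrite GiY /Y mxE [X in _ + X]mxE.
apply: le_trans (ler_normB _ _) _; rewrite Sx.
apply: le_trans (lerD (GaB k l) hS) _.
have hn : (#|I|%:R : C) <= (4 * K + 1)%:R.
  rewrite ler_nat; apply: leq_trans (subset_leq_card HI) _; exact: card_window.
have gGa : 1 <= g * Ga by rewrite -(mulr1 1) ler_pM.
set t := g * Ga ^+ 2.
have t0 : 0 <= t by rewrite mulr_ge0 // exprn_ge0.
have h1 : Ga <= t.
  by rewrite /t expr2 mulrA -{1}(mul1r Ga); apply: ler_wpM2r.
have h2 : Ga * (#|I|%:R * g * Ga) <= (4 * K + 1)%:R * t.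
  have -> : Ga * (#|I|%:R * g * Ga) = #|I|%:R * t by rewrite /t; ring.
  by apply: ler_wpM2r.
apply: le_trans (lerD h1 h2) _.
have -> : 8%:R * (K ^ 2)%:R * Ga ^+ 2 * g = (8 * K ^ 2)%:R * t.
  by rewrite /t natrM; ring.
have -> : t + (4 * K + 1)%:R * t = (4 * K + 2)%:R * t.
  rewrite -{1}(mul1r t) -mulrDl; congr (_ * _).
  by rewrite -(natrD C 1); congr (_%:R); rewrite addnC -addnA.
have hK : (4 * K + 2 <= 8 * K ^ 2)%N.
  exact: arithK.
by apply: ler_wpM2r => //; rewrite ler_nat.
Qed.
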